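(* Let $A$ be a finite-dimensional algebra (not necessarily associative) over an algebraically closed field $K$, let $\delta,\gamma\in K$, and let $D$ be a $(\delta,\gamma)$-derivation of $A$, with root space decomposition $A=\bigoplus_{\lambda}A_\lambda$. Suppose there are roots $\lambda,\mu,\eta,\theta,\xi$ of $D$ (not necessarily distinct) such that $$0\ne A_\lambda A_\eta\subseteq A_\theta,\quad A_\theta A_\mu\ne 0,\qquad 0\ne A_\eta A_\mu\subseteq A_\xi,\quad A_\lambda A_\xi\ne 0,$$ and $(\delta^2-\delta)\lambda\ne(\gamma^2-\gamma)\mu$. Then the root space decomposition of $A$ with respect to $D$ is a non-semigroup grading of $A$.
   Context: An algebra means a vector space $A$ with a bilinear multiplication, with no identities assumed. For fixed $\delta,\gamma\in K$, a $(\delta,\gamma)$-derivation of $A$ is a linear map $D:A\to A$ with $D(xy)=\delta D(x)y+\gamma xD(y)$ for all $x,y\in A$. The root space decomposition with respect to $D$ is $A=\bigoplus_\lambda A_\lambda$ over the eigenvalues (roots) $\lambda$ of $D$, where $A_\lambda$ is the generalized eigenspace of $D$ for $\lambda$. A grading of $A$ over a set $\Gamma$ is a decomposition $A=\bigoplus_{g\in\Gamma}A_g$ together with a partial binary operation $*$ on $\Gamma$, defined for exactly those pairs $(g,h)$ with $A_gA_h\ne0$, such that $A_gA_h\subseteq A_{g*h}$ in that case. The grading is a semigroup grading if there is a semigroup $(G,\cdot)$ and an injective map $\Gamma\to G$ under which $g*h=g\cdot h$ whenever $A_gA_h\ne0$; otherwise it is a non-semigroup grading. *)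

(* Defs.v *)
From HB Require Import structures.
From mathcomp Require Import all_boot all_order all_algebra.
Set Implicit Arguments. Unset Strict Implicit. Unset Printing Implicit Defensive.
Import GRing.Theory.
Local Open Scope ring_scope.

Section Defs.
Variables (K : fieldType) (V : vectType K).

Definition bilinear_mul (mul : V -> V -> V) : Prop :=
  (forall (a : K) (x y z : V), mul (a *: x + y) z = a *: mul x z + mul y z) /\
  (forall (a : K) (x y z : V), mul x (a *: y + z) = a *: mul x y + mul x z).

Definition dg_derivation (mul : V -> V -> V) (delta gamma : K) (D : 'End(V)) : Prop :=
  forall x y : V, D (mul x y) = delta *: mul (D x) y + gamma *: mul x (D y).

(* generalized eigenspace of D for lambda: kernel of (D - lambda)^(dim V) *)
Definition root_space (D : 'End(V)) (lambda : K) : {vspace V} :=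
  lker (iter (\dim (fullv : {vspace V})) (fun f => ((D - lambda *: \1) \o f)%VF) \1%VF).

Definition is_root (D : 'End(V)) (lambda : K) : bool := root_space D lambda != 0%VS.

Definition prod_nonzero (mul : V -> V -> V) (U W : {vspace V}) : Prop :=
  exists x y, x \in U /\ y \in W /\ mul x y != 0.

Definition prod_sub (mul : V -> V -> V) (U W X : {vspace V}) : Prop :=
  forall x y, x \in U -> y \in W -> mul x y \in X.

(* A = (+)_{g in Gamma} A_g, with partial operation op (relevant only where
   A_g A_h <> 0) satisfying A_g A_h \subseteq A_{g*h}. *)
Definition is_grading (mul : V -> V -> V) (Gamma : eqType)
    (A : Gamma -> {vspace V}) (op : Gamma -> Gamma -> Gamma) : Prop :=
  (forall s : seq Gamma, uniq s -> directv (\sum_(g <- s) A g)) /\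
  (exists s : seq Gamma, (\sum_(g <- s) A g)%VS = fullv) /\
  (forall g h, prod_nonzero mul (A g) (A h) -> prod_sub mul (A g) (A h) (A (op g h))).

Definition semigroup_grading (mul : V -> V -> V) (Gamma : eqType)
    (A : Gamma -> {vspace V}) (op : Gamma -> Gamma -> Gamma) : Prop :=
  exists (G : Type) (m : G -> G -> G) (phi : Gamma -> G),
    associative m /\ injective phi /\
    forall g h, prod_nonzero mul (A g) (A h) -> phi (op g h) = m (phi g) (phi h).

Definition roots_of (D : 'End(V)) : eqType := {lambda : K | is_root D lambda}.

Definition root_decomp (D : 'End(V)) (g : roots_of D) : {vspace V} :=
  root_space D (val g).

Definition root_decomp_nonsemigroup_grading (mul : V -> V -> V) (D : 'End(V)) : Prop :=
  (exists op, is_grading mul (@root_decomp D) op) /\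
  (forall op, is_grading mul (@root_decomp D) op ->
     ~ semigroup_grading mul (@root_decomp D) op).

End Defs.

(* Main.v *)
Require Import Defs.
From HB Require Import structures.
From mathcomp Require Import all_boot all_order all_algebra.
From mathcomp Require Import ring.
Import GRing.Theory.
Local Open Scope ring_scope.

Module Helpers.
Set Implicit Arguments. Unset Strict Implicit. Unset Printing Implicit Defensive.
Import passmx.

Section Stab.
Variables (K : fieldType) (V : vectType K).

Definition pw (f : 'End(V)) k := iter k (fun g => (f \o g)%VF) \1%VF.

Lemma pwE f k x : pw f k x = iter k f x.
Proof.
elim: k => [|k IH]; first by rewrite /pw /= id_lfunE.
by rewrite /pw iterS comp_lfunE -/(pw f k) IH.
Qed.

Lemma iter_lin0 (f : 'End(V)) k : iter k f 0 = 0.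
Proof. by elim: k => [|k IH] //=; rewrite IH linear0. Qed.

Lemma iter_linP (f : 'End(V)) k a x y :
  iter k f (a *: x + y) = a *: iter k f x + iter k f y.
Proof. by elim: k => [|k IH] //=; rewrite IH linearP. Qed.

Lemma iter_linZ (f : 'End(V)) k a x : iter k f (a *: x) = a *: iter k f x.
Proof. by elim: k => [|k IH] //=; rewrite IH linearZ. Qed.

Lemma mem_pw f k x : (x \in lker (pw f k)) = (iter k f x == 0).
Proof. by rewrite memv_ker pwE. Qed.

Lemma pw_mono f k l : (k <= l)%N -> (lker (pw f k) <= lker (pw f l))%VS.
Proof.
move=> kl; apply/subvP => x; rewrite !mem_pw => /eqP H.
by rewrite -(subnK kl) iterD H iter_lin0.
Qed.

Lemma pw_stab f k : lker (pw f k) = lker (pw f k.+1) ->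
  forall j, (lker (pw f (k + j)%N) <= lker (pw f k))%VS.
Proof.
move=> E; elim=> [|j IH]; first by rewrite addn0 subvv.
apply/subvP => x Hx.
have H1 : iter j f x \in lker (pw f k.+1).
  by rewrite mem_pw -iterD addSn -addnS -mem_pw.
rewrite -E mem_pw -iterD in H1.
by apply: (subvP IH); rewrite mem_pw.
Qed.

Lemma pw_growth f k : (exists k', (k' < k)%N /\ lker (pw f k') = lker (pw f k'.+1))
   \/ (k <= \dim (lker (pw f k)))%N.
Proof.
elim: k => [|k [[k' [H1 H2]]|IH]]; first by right.
- by left; exists k'; split => //; apply: ltnW.
case E: (lker (pw f k) == lker (pw f k.+1)).
  by left; exists k; split => //; apply/eqP.
right; apply: (leq_ltn_trans IH).
have S := pw_mono f (leqnSn k).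
rewrite ltnNge; apply/negP => Hd.
by move: E; rewrite eqEdim S Hd.
Qed.

Lemma pw_final f j : lker (pw f (\dim {:V} + j)%N) = lker (pw f (\dim {:V})).
Proof.
have [[k' [H1 H2]]|H] := pw_growth f (\dim {:V}).
  apply/eqP; rewrite eqEdim (dimvS (pw_mono f (leq_addr j _))) andbT.
  apply: (subv_trans _ (pw_mono f (ltnW H1))).
  have -> : (\dim {:V} + j = k' + (\dim {:V} - k' + j))%N.
    by rewrite addnA subnKC // ltnW.
  exact: pw_stab.
have F : lker (pw f (\dim {:V})) = fullv.
  by apply/eqP; rewrite eqEdim subvf.
apply/eqP; rewrite eqEdim F subvf /=; rewrite -{1}F; exact: (dimvS (pw_mono f (leq_addr j _))).
Qed.

End Stab.


Section Prod.
Variables (K : fieldType) (V : vectType K) (mul : V -> V -> V) (Hmul : bilinear_mul mul).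
Variables (delta gamma : K) (D : 'End(V)) (HD : dg_derivation mul delta gamma D).

Lemma mul0l z : mul 0 z = 0.
Proof.
have h := Hmul.1 1 0 0 z; rewrite !scale1r !addr0 in h.
by have := congr1 (fun w => w - mul 0 z) h; rewrite subrr addrK => /esym ->.
Qed.
Lemma mul0r z : mul z 0 = 0.
Proof.
have h := Hmul.2 1 z 0 0; rewrite !scale1r !addr0 in h.
by have := congr1 (fun w => w - mul z 0) h; rewrite subrr addrK => /esym ->.
Qed.
Lemma mulZl a x z : mul (a *: x) z = a *: mul x z.
Proof. by have := Hmul.1 a x 0 z; rewrite addr0 mul0l addr0. Qed.
Lemma mulZr a x z : mul z (a *: x) = a *: mul z x.
Proof. by have := Hmul.2 a z x 0; rewrite addr0 mul0r addr0. Qed.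
Lemma mulBl x y z : mul (x - y) z = mul x z - mul y z.
Proof. by have := Hmul.1 (-1) y x z; rewrite !scaleN1r addrC => ->; rewrite addrC. Qed.
Lemma mulBr x y z : mul z (x - y) = mul z x - mul z y.
Proof. by have := Hmul.2 (-1) z y x; rewrite !scaleN1r addrC => ->; rewrite addrC. Qed.

Lemma Estep a b u v :
  (D - (delta * a + gamma * b) *: \1%VF) (mul u v) =
  delta *: mul ((D - a *: \1%VF) u) v + gamma *: mul u ((D - b *: \1%VF) v).
Proof.
rewrite !(add_lfunE, opp_lfunE, scale_lfunE, id_lfunE) HD.
rewrite mulBl mulBr mulZl mulZr !scalerBr !scalerA scalerDl opprD addrACA.
done.
Qed.

Definition Wsp a b k u v : {vspace V} :=
  <<[seq mul (iter i (D - a *: \1%VF) u) (iter (k - i) (D - b *: \1%VF) v)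
    | i <- iota 0 k.+1]>>%VS.

Lemma iterW a b k u v :
  iter k (D - (delta * a + gamma * b) *: \1%VF) (mul u v) \in Wsp a b k u v.
Proof.
elim: k u v => [|k IH] u v.
  by rewrite /= /Wsp memv_span //= inE eqxx.
rewrite iterSr Estep (iter_linP (D - (delta * a + gamma * b) *: \1%VF) k delta).
rewrite iter_linZ.
apply: memvD; apply: memvZ.
  apply: (subvP _ _ (IH _ _)); apply/span_subvP => w /mapP [i Hi ->].
  apply: memv_span; apply/mapP; exists i.+1.
    by move: Hi; rewrite !mem_iota /= !add0n.
  by rewrite -iterSr subSS.
apply: (subvP _ _ (IH _ _)); apply/span_subvP => w /mapP [i Hi ->].
apply: memv_span; apply/mapP; exists i.
  by move: Hi; rewrite !mem_iota /= !add0n => /ltnW.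
move: Hi; rewrite mem_iota add0n ltnS => Hi.
by rewrite -iterSr subSn.
Qed.

Lemma prod_root a b x y : x \in root_space D a -> y \in root_space D b ->
  mul x y \in root_space D (delta * a + gamma * b).
Proof.
rewrite /root_space -!/(pw _ _) => Hx Hy.
move: Hx Hy; rewrite !mem_pw => /eqP Hx /eqP Hy.
rewrite -mem_pw -(pw_final _ (\dim {:V})) mem_pw.
have := iterW a b (\dim {:V} + \dim {:V}) x y.
set N := \dim {:V}.
suff -> : Wsp a b (N + N) x y = 0%VS by rewrite memv0.
apply/eqP; rewrite -subv0; apply/span_subvP => w /mapP [i Hi ->].
rewrite memv0; apply/eqP.
case: (leqP N i) => Hi2.
  by rewrite -(subnK Hi2) iterD Hx iter_lin0 mul0l.
have Hle : (N <= N + N - i)%N.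
  by rewrite -addnBA ?leq_addr // ltnW.
by rewrite -(subnK Hle) iterD Hy iter_lin0 mul0r.
Qed.

End Prod.


Section MxGen.
Variable K : fieldType.

Lemma kermxpoly_subM m (M : 'M[K]_m) p q : (kermxpoly M p <= kermxpoly M (p * q))%MS.
Proof.
case: m => [|m] in M *; first by rewrite thinmx0 sub0mx.
rewrite /kermxpoly; apply/sub_kermxP.
by rewrite rmorphM /= -mulmxE mulmxA mulmx_ker mul0mx.
Qed.

Lemma sum_sub_ker m (M : 'M[K]_m) (t : seq K) (p : K -> {poly K}) :
  (\sum_(b <- t) kermxpoly M (p b) <= kermxpoly M (\prod_(b <- t) p b))%MS.
Proof.
elim: t => [|b t IH]; first by rewrite !big_nil sub0mx.
rewrite !big_cons addsmx_sub kermxpoly_subM /=.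
by apply: (submx_trans IH); rewrite mulrC kermxpoly_subM.
Qed.

Lemma G_disj m (M : 'M[K]_m) a t : a \notin t ->
  (geigenspace M a :&: \sum_(b <- t) geigenspace M b)%MS = 0.
Proof.
move=> at_.
apply/eqP; rewrite -submx0.
apply: submx_trans (capmxS (submx_refl _) (sum_sub_ker M t (fun b => ('X - b%:P) ^+ m))) _.
rewrite mxdirect_kermxpoly ?submx_refl //.
apply: coprimep_expl; rewrite coprimep_sym coprimep_XsubC /root horner_prod prodf_seq_neq0.
apply/allP => b bt /=; rewrite horner_exp hornerXsubC expf_neq0 // subr_eq0.
by apply: contraNneq at_ => ->.
Qed.

Lemma kermx_iter m (B : 'M[K]_m) lam :
  kermx (iter m (fun A => A *m (B - lam%:M)) 1%:M) = geigenspace B lam.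
Proof.
move: B; case: m => [|m] B; first by rewrite !thinmx0.
rewrite geigenspaceE; congr kermx.
have H : forall (C : 'M[K]_m.+1) k, iter k (fun A => A *m C) 1%:M = C ^+ k.
  by move=> C; elim=> [|k IH] //=; rewrite IH exprSr mulmxE.
exact: H.
Qed.

End MxGen.

Section MxSpan.
Variable K : closedFieldType.

Lemma G_span m (M : 'M[K]_m) : exists s : seq K,
  [/\ uniq s, forall a, a \in s -> geigenspace M a != 0 &
      (1%:M <= \sum_(a <- s) geigenspace M a)%MS].
Proof.
case: m => [|m] in M *.
  by exists [::]; split => //; rewrite thinmx0 sub0mx.
have [rs Hrs] := closed_field_poly_normal (char_poly M).
rewrite (monicP (char_poly_monic M)) scale1r in Hrs.
have Hsz : size rs = m.+1.
  by have := size_char_poly M; rewrite Hrs size_prod_XsubC => -[].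
exists (undup rs); split; first exact: undup_uniq.
  move=> a; rewrite mem_undup => ars.
  have : eigenvalue M a by rewrite eigenvalue_root_char Hrs root_prod_XsubC.
  apply: contraNN => /eqP G0.
  by rewrite /eigenvalue -submx0 -G0 eigenspace_sub_geigen.
set s := undup rs.
rewrite (big_nth 0) big_mkord.
have Hcop : {in xpredT &, forall i j : 'I_(size s), j != i ->
   coprimep (('X - (s`_i)%:P) ^+ m.+1) (('X - (s`_j)%:P) ^+ m.+1)}.
  move=> i j _ _ ji; rewrite coprimep_expr ?coprimep_expl // coprimep_XsubC2 // subr_eq0.
  by rewrite nth_uniq ?undup_uniq //.
have E := kermxpoly_prod M Hcop.
have /andP [E1 _] := introT eqmxP E.
apply: submx_trans E1.
have Hmin : mxminpoly M %| \prod_(i < size s) ('X - (s`_i)%:P) ^+ m.+1.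
  apply: dvdp_trans (mxminpoly_dvd_char M) _.
  rewrite Hrs -prodr_undup_exp_count -/s.
  rewrite -(big_mkord xpredT (fun i => ('X - (s`_i)%:P) ^+ m.+1)) -(big_nth 0 xpredT (fun a => ('X - a%:P) ^+ m.+1)).
  have : forall a, a \in s -> (count_mem a rs <= m.+1)%N.
    by move=> a _; rewrite -Hsz count_size.
  elim: (s) => [|a t IH] Hc; first by rewrite !big_nil dvdpp.
  rewrite !big_cons; apply: dvdp_mul; first by apply: dvdp_exp2l; apply: Hc; rewrite inE eqxx.
  by apply: IH => b bt; apply: Hc; rewrite inE bt orbT.
have /andP [_ F2] := introT eqmxP (kermxpoly_min Hmin).
exact: F2.
Qed.

End MxSpan.


Section Transfer.
Variables (K : closedFieldType) (V : vectType K) (D : 'End(V)).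
Let e := vbasis {:V}.
Let eb : basis_of {:V} e := vbasisP {:V}.

Lemma mxof_pw f k : mxof e e (pw f k) = iter k (fun A => A *m mxof e e f) 1%:M.
Proof.
elim: k => [|k IH]; first by rewrite /pw /= mxof1 // (basis_free eb).
by rewrite /pw iterS (mxof_comp e e eb) -/(pw f k) IH.
Qed.

Let M := mxof e e D.

Lemma RSE lam : root_space D lam = vsof e (geigenspace M lam).
Proof.
rewrite /root_space -/(pw _ _) (lker_ker eb) mxof_pw.
have -> : mxof e e (D - lam *: \1%VF) = M - lam%:M.
  by rewrite linearB linearZ /= mxof1 ?(basis_free eb) // scalemx1.
by rewrite kermx_iter.
Qed.

Lemma vsof_adds (A B : 'M[K]_(\dim {:V})) : vsof e (A + B)%MS = (vsof e A + vsof e B)%VS.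
Proof.
apply/eqP; rewrite eqEsubv; apply/andP; split.
  rewrite (vsof_sub eb) addsmx_sub -!(vsof_sub eb).
  by rewrite addvSl addvSr.
by rewrite subv_add !(sub_vsof eb) addsmxSl addsmxSr.
Qed.

Lemma vsof_sum (t : seq K) (F : K -> 'M[K]_(\dim {:V})) :
  (\sum_(b <- t) vsof e (F b))%VS = vsof e (\sum_(b <- t) F b)%MS.
Proof.
elim: t => [|b t IH]; first by rewrite !big_nil (vsof0 eb).
by rewrite !big_cons IH vsof_adds.
Qed.

Lemma vsof_cap0 (A B : 'M[K]_(\dim {:V})) : (A :&: B = 0)%MS ->
  (vsof e A :&: vsof e B = 0)%VS.
Proof.
move=> AB; apply/eqP; rewrite -(msof_eq0 eb) -submx0 -AB sub_capmx.
by rewrite !(msof_sub eb) capvSl capvSr.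
Qed.

Lemma RS_disj a t : a \notin t ->
  (root_space D a :&: \sum_(b <- t) root_space D b = 0)%VS.
Proof.
move=> at_.
rewrite RSE (eq_bigr (fun b => vsof e (geigenspace M b))) => [|b _]; last exact: RSE.
rewrite vsof_sum; apply: vsof_cap0; exact: G_disj.
Qed.

Lemma RS_dim t : uniq t ->
  \dim (\sum_(a <- t) root_space D a) = (\sum_(a <- t) \dim (root_space D a))%N.
Proof.
elim: t => [|a t IH]; first by rewrite !big_nil dimv0.
rewrite /= => /andP [at_ ut].
by rewrite !big_cons dimv_disjoint_sum ?RS_disj // IH.
Qed.

Lemma RS_uniq a b w : w != 0 -> w \in root_space D a -> w \in root_space D b -> a = b.
Proof.
move=> w0 wa wb; apply/eqP; apply: contraNT w0 => ab.
have := RS_disj (t := [:: b]) (a := a); rewrite inE big_seq1 => /(_ ab) H.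
by rewrite -memv0 -H memv_cap wa wb.
Qed.

Lemma RS_span : exists s : seq K,
  [/\ uniq s, forall a, a \in s -> is_root D a & (\sum_(a <- s) root_space D a)%VS = fullv].
Proof.
have [s [us Hs Hsum]] := G_span M.
exists s; split => //.
  by move=> a /Hs; rewrite /is_root RSE (vsof_eq0 eb).
rewrite (eq_bigr (fun b => vsof e (geigenspace M b))) => [|b _]; last exact: RSE.
rewrite vsof_sum; apply/eqP; rewrite eqEsubv subvf /= -(msof_sub eb).
apply: submx_trans Hsum; exact: submx1.
Qed.

End Transfer.

End Helpers.
Import Helpers.


Theorem mainTheorem2 (K : closedFieldType) (V : vectType K)
  (mul : V -> V -> V) (Hmul : bilinear_mul mul)
  (delta gamma : K) (D : 'End(V)) (HD : dg_derivation mul delta gamma D)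
  (lam mu eta theta xi : K)
  (Hlam : is_root D lam) (Hmu : is_root D mu) (Heta : is_root D eta)
  (Htheta : is_root D theta) (Hxi : is_root D xi)
  (H1 : prod_nonzero mul (root_space D lam) (root_space D eta))
  (H2 : prod_sub mul (root_space D lam) (root_space D eta) (root_space D theta))
  (H3 : prod_nonzero mul (root_space D theta) (root_space D mu))
  (H4 : prod_nonzero mul (root_space D eta) (root_space D mu))
  (H5 : prod_sub mul (root_space D eta) (root_space D mu) (root_space D xi))
  (H6 : prod_nonzero mul (root_space D lam) (root_space D xi))
  (Hne : (delta ^+ 2 - delta) * lam != (gamma ^+ 2 - gamma) * mu) :
  root_decomp_nonsemigroup_grading mul D.
Proof.
have prodR := prod_root Hmul HD.
have rootc : forall a b, prod_nonzero mul (root_space D a) (root_space D b) ->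
    is_root D (delta * a + gamma * b).
  move=> a b [x [y [hx [hy hxy]]]].
  rewrite /is_root; apply: contraNneq hxy => E.
  by rewrite -memv0 -E prodR.
split.
  exists (fun g h : roots_of D => insubd g (delta * val g + gamma * val h)).
  split; [|split].
  - move=> s us; rewrite directvE /=.
    rewrite /root_decomp.
    have -> : (\sum_(g <- s) root_space D (val g))%VS =
              (\sum_(a <- map val s) root_space D a)%VS by rewrite big_map.
    have -> : (\sum_(g <- s) \dim (root_space D (val g)))%N =
              (\sum_(a <- map val s) \dim (root_space D a))%N by rewrite big_map.
    by rewrite RS_dim // map_inj_uniq //; apply: val_inj.
  - have [t [ut Ht Hsum]] := RS_span D.
    have [sG HsG] : exists sG : seq (roots_of D), map val sG = t.
      elim: (t) Ht => [|a t' IH] Ht'; first by exists [::].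
      have [|s' Hs'] := IH; first by move=> b bt; apply: Ht'; rewrite inE bt orbT.
      have Ha : is_root D a by apply: Ht'; rewrite inE eqxx.
      by exists ((exist _ a Ha : roots_of D) :: s'); rewrite /= Hs'.
    apply: (@ex_intro _ _ sG).
    rewrite /root_decomp.
    have -> : (\sum_(g <- sG) root_space D (val g))%VS =
              (\sum_(a <- map val sG) root_space D a)%VS by rewrite big_map.
    rewrite HsG; exact: Hsum.
  - move=> g h Hgh u v hu hv.
    rewrite /root_decomp val_insubd rootc //.
    exact: prodR.
move=> op [_ [_ Hop]] [G [m [phi [Hass [Hinj Hphi]]]]].
pose rl := exist (fun l => is_root D l) lam Hlam : roots_of D.
pose rm := exist (fun l => is_root D l) mu Hmu : roots_of D.
pose re := exist (fun l => is_root D l) eta Heta : roots_of D.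
pose rt := exist (fun l => is_root D l) theta Htheta : roots_of D.
pose rx := exist (fun l => is_root D l) xi Hxi : roots_of D.
have opval : forall g h : roots_of D,
    prod_nonzero mul (root_space D (val g)) (root_space D (val h)) ->
    val (op g h) = delta * val g + gamma * val h.
  move=> g h Hgh; have [x [y [hx [hy hxy]]]] := Hgh.
  apply: (RS_uniq hxy); first exact: (Hop g h Hgh).
  exact: prodR.
have opk : forall g h k : roots_of D,
    prod_nonzero mul (root_space D (val g)) (root_space D (val h)) ->
    prod_sub mul (root_space D (val g)) (root_space D (val h)) (root_space D (val k)) ->
    op g h = k.
  move=> g h k Hgh Hs; have [x [y [hx [hy hxy]]]] := Hgh.
  apply: val_inj; apply: (RS_uniq hxy); first exact: (Hop g h Hgh).
  exact: Hs.
have Elet : op rl re = rt by apply: opk.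
have Eemx : op re rm = rx by apply: opk.
have Vt : theta = delta * lam + gamma * eta.
  by have := opval rl re H1; rewrite Elet.
have Vx : xi = delta * eta + gamma * mu.
  by have := opval re rm H4; rewrite Eemx.
have V1 : val (op rt rm) = delta * theta + gamma * mu := opval rt rm H3.
have V2 : val (op rl rx) = delta * lam + gamma * xi := opval rl rx H6.
have Eq : op rt rm = op rl rx.
  apply: Hinj.
  rewrite (Hphi rt rm H3) (Hphi rl rx H6).
  rewrite -Elet -Eemx (Hphi rl re H1) (Hphi re rm H4).
  by rewrite Hass.
have Heq : delta * theta + gamma * mu = delta * lam + gamma * xi.
  by rewrite -V1 -V2 Eq.
rewrite Vt Vx in Heq.
apply: (negP Hne); apply/eqP; apply/eqP; rewrite -subr_eq0.
have -> : (delta ^+ 2 - delta) * lam - (gamma ^+ 2 - gamma) * mu =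
  (delta * (delta * lam + gamma * eta) + gamma * mu) -
  (delta * lam + gamma * (delta * eta + gamma * mu)) by ring.
by rewrite Heq subrr.
Qed.
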